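(* For all processes $s,t$ of a PTS, $s$ and $t$ are strong probabilistic trace equivalent if and only if $\mathcal{L}(s)=\mathcal{L}(t)$.
   Context: PTS $(\mathcal{S},A,\to)$ with finitely supported distributions; processes image-finite and finite. Computations $c=s_0\xrightarrow{a_1}\cdots\xrightarrow{a_n}s_n$ via transitions $s_{i-1}\xrightarrow{a_i}\pi_i$, $s_i\in\mathrm{supp}(\pi_i)$; $\Pr(c)=\prod\pi_i(s_i)$ (empty computation: 1); $|c|=n$; $\mathrm{tr}(c)=a_1\cdots a_n$; $\mathcal{C}(z,\alpha)$ = computations from $z$ with trace $\alpha$; maximal = not a proper prefix of another computation from the same process; $\mathcal{C}_{\max}(z)$; $\Pr$ of a set is the sum. A resolution of $s$ is a PTS $\mathcal{Z}=(Z,A,\to_{\mathcal{Z}})$ with $\mathrm{corr}\colon Z\to\mathcal{S}$ and initial state $z_s$, $\mathrm{corr}(z_s)=s$, such that $z_s$ is in no target support, every other state is in the support of a target of a transition from a different state, every $z\xrightarrow{a}_{\mathcal{Z}}\pi$ is matched by $\mathrm{corr}(z)\xrightarrow{a}\pi'$ with $\pi(z')=\pi'(\mathrm{corr}(z'))$, and each state has at most one outgoing transition; $\mathrm{res}(s)$ is the set of resolutions. $s,t$ are strong probabilistic trace equivalent iff for each $\mathcal{Z}_s\in\mathrm{res}(s)$ (initial state $z_s$) there is $\mathcal{Z}_t\in\mathrm{res}(t)$ (initial state $z_t$) with $\Pr(\mathcal{C}(z_s,\alpha))=\Pr(\mathcal{C}(z_t,\alpha))$ for all $\alpha\in A^\star$,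 and symmetrically with $s,t$ swapped. Logic $\mathcal{L}$: trace formulae $\Phi::=\top\mid\langle a\rangle\Phi$, $\mathrm{depth}(\top)=0$, $\mathrm{depth}(\langle a\rangle\Phi)=1+\mathrm{depth}(\Phi)$; trace distribution formulae $\bigoplus_{i\in I}r_i\Phi_i$ ($I$ finite nonempty, $\Phi_i$ pairwise distinct, $r_i\in(0,1]$, $\sum r_i=1$), identified with distributions on trace formulae. $c\models\top$ always; $c\models\langle a\rangle\Phi$ iff $c=s\xrightarrow{a}c'$ with $c'\models\Phi$. $s\models\bigoplus_i r_i\Phi_i$ iff some $\mathcal{Z}\in\mathrm{res}(s)$ with initial state $z$ satisfies $\Pr(\{c\in\mathcal{C}_{\max}(z):c\models\Phi_i,|c|=\mathrm{depth}(\Phi_i)\})=r_i$ for all $i$. $\mathcal{L}(s)$ is the set of trace distribution formulae satisfied by $s$. *)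

(* Defs.v *)
From Stdlib Require Import Reals List.
Import ListNotations.
Open Scope R_scope.
Set Implicit Arguments.

Section PTS.
Variables (St A : Type).

Definition lsum {X : Type} (f : X -> R) (l : list X) : R :=
  fold_right Rplus 0 (map f l).

Definition is_fdist {X : Type} (pi : X -> R) : Prop :=
  (forall x, 0 <= pi x) /\
  exists l : list X, NoDup l /\ (forall x, pi x <> 0 -> In x l) /\ lsum pi l = 1.

Definition transrel (X : Type) := X -> A -> (X -> R) -> Prop.

Definition is_PTS {X : Type} (tr : transrel X) : Prop :=
  forall x a pi, tr x a pi -> is_fdist pi.

(** A computation from x0 is the list of its steps (a_i, pi_i, s_i):
    s_{i-1} --a_i--> pi_i and s_i in supp(pi_i). *)
Definition step (X : Type) := (A * (X -> R) * X)%type.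

Fixpoint is_comp {X : Type} (tr : transrel X) (x : X) (c : list (step X)) : Prop :=
  match c with
  | [] => True
  | (a, pi, x') :: c' => tr x a pi /\ 0 < pi x' /\ is_comp tr x' c'
  end.

Definition comp_pr {X : Type} (c : list (step X)) : R :=
  fold_right Rmult 1 (map (fun st => match st with (_, pi, x') => pi x' end) c).

Definition comp_tr {X : Type} (c : list (step X)) : list A :=
  map (fun st => match st with (a, _, _) => a end) c.

Definition comp_max {X : Type} (tr : transrel X) (x : X) (c : list (step X)) : Prop :=
  is_comp tr x c /\
  ~ (exists d, d <> [] /\ is_comp tr x (c ++ d)).

Definition PrSet {X : Type} (P : list (step X) -> Prop) (r : R) : Prop :=
  exists l, NoDup l /\ (forall c, P c <-> In c l) /\ r = lsum (@comp_pr X) l.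

Definition Ctr {X : Type} (tr : transrel X) (z : X) (alpha : list A) :
  list (step X) -> Prop :=
  fun c => is_comp tr z c /\ comp_tr c = alpha.

Definition succ (tr : transrel St) (u v : St) : Prop :=
  exists a pi, tr u a pi /\ 0 < pi v.

Inductive reach (tr : transrel St) : St -> St -> Prop :=
| reach_refl u : reach tr u u
| reach_step u v w : succ tr u v -> reach tr v w -> reach tr u w.

Definition reach_plus (tr : transrel St) (u w : St) : Prop :=
  exists v, succ tr u v /\ reach tr v w.

Definition image_finite (tr : transrel St) : Prop :=
  forall s a, exists l : list (St -> R), forall pi, tr s a pi -> In pi l.

Definition finite_proc (tr : transrel St) (s : St) : Prop :=
  (exists l : list St, forall u, reach tr s u -> In u l) /\
  (forall u, reach tr s u ->
     exists l : list (A * (St -> R)), forall a pi, tr u a pi -> In (a, pi) l) /\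
  (forall u, reach tr s u -> ~ reach_plus tr u u).

Record resolution (tr : transrel St) (s : St) := {
  rZ : Type;
  rtrans : transrel rZ;
  rcorr : rZ -> St;
  rinit : rZ;
  r_pts : is_PTS rtrans;
  r_init_corr : rcorr rinit = s;
  r_init_root : forall z a pi, rtrans z a pi -> ~ (0 < pi rinit);
  r_others : forall z, z <> rinit ->
     exists z0 a pi, z0 <> z /\ rtrans z0 a pi /\ 0 < pi z;
  r_match : forall z a pi, rtrans z a pi ->
     exists pi', tr (rcorr z) a pi' /\ forall z', pi z' = pi' (rcorr z');
  r_det : forall z a1 pi1 a2 pi2, rtrans z a1 pi1 -> rtrans z a2 pi2 ->
     a1 = a2 /\ pi1 = pi2
}.

Definition res_trace_matched (tr : transrel St) (s t : St) : Prop :=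
  forall Zs : resolution tr s, exists Zt : resolution tr t,
    forall alpha : list A, exists r,
      PrSet (Ctr (rtrans Zs) (rinit Zs) alpha) r /\
      PrSet (Ctr (rtrans Zt) (rinit Zt) alpha) r.

Definition sptrace_equiv (tr : transrel St) (s t : St) : Prop :=
  res_trace_matched tr s t /\ res_trace_matched tr t s.

Inductive tformula : Type :=
| TTop : tformula
| TDiam : A -> tformula -> tformula.

Fixpoint depth (f : tformula) : nat :=
  match f with TTop => 0%nat | TDiam _ f' => S (depth f') end.

Fixpoint csat {X : Type} (c : list (step X)) (f : tformula) : Prop :=
  match f with
  | TTop => True
  | TDiam a f' => match c with
                  | [] => False
                  | (a', _, _) :: c' => a' = a /\ csat c' f'
                  end
  end.

(** trace distribution formula  (+)_i r_i Phi_i, as a list of pairs (r_i, Phi_i) *)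
Definition tdformula := list (R * tformula).

Definition wf_tdformula (F : tdformula) : Prop :=
  F <> [] /\ NoDup (map snd F) /\
  (forall r f, In (r, f) F -> 0 < r <= 1) /\
  lsum fst F = 1.

Definition psat (tr : transrel St) (s : St) (F : tdformula) : Prop :=
  exists Z : resolution tr s,
    forall r f, In (r, f) F ->
      PrSet (fun c => comp_max (rtrans Z) (rinit Z) c /\ csat c f /\
                      length c = depth f) r.

Definition Lset (tr : transrel St) (s : St) : tdformula -> Prop :=
  fun F => wf_tdformula F /\ psat tr s F.

End PTS.

(* Main.v *)
Require Import Defs.
From Stdlib Require Import Reals List ClassicalEpsilon Classical Permutation Lra Lia.
Import ListNotations.
Open Scope R_scope.

Definition ind (P : Prop) (x : R) : R :=
  if excluded_middle_informative P then x else 0.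

Lemma ind_T (P : Prop) x : P -> ind P x = x.
Proof. intro H; unfold ind; destruct excluded_middle_informative; tauto. Qed.
Lemma ind_F (P : Prop) x : ~ P -> ind P x = 0.
Proof. intro H; unfold ind; destruct excluded_middle_informative; tauto. Qed.
Lemma ind_iff (P Q : Prop) x : (P <-> Q) -> ind P x = ind Q x.
Proof. intro H; unfold ind; do 2 destruct excluded_middle_informative; tauto. Qed.
Lemma ind_and (P Q : Prop) x : ind (P /\ Q) x = ind Q (ind P x).
Proof. unfold ind; repeat destruct excluded_middle_informative; tauto. Qed.
Lemma ind_ge0 (P : Prop) x : 0 <= x -> 0 <= ind P x.
Proof. unfold ind; destruct excluded_middle_informative; lra. Qed.
Lemma ind_le (P : Prop) x : 0 <= x -> ind P x <= x.
Proof. unfold ind; destruct excluded_middle_informative; lra. Qed.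
Lemma ind_mult (P : Prop) k x : ind P (k * x) = k * ind P x.
Proof. unfold ind; destruct excluded_middle_informative; ring. Qed.

Section LS.
Context {T : Type}.
Lemma lsum_nil (f : T -> R) : lsum f [] = 0. Proof. reflexivity. Qed.
Lemma lsum_cons (f : T -> R) x l : lsum f (x :: l) = f x + lsum f l.
Proof. reflexivity. Qed.
Lemma lsum_app (f : T -> R) l1 l2 : lsum f (l1 ++ l2) = lsum f l1 + lsum f l2.
Proof. induction l1; simpl; [rewrite lsum_nil; lra|]. rewrite !lsum_cons, IHl1; lra. Qed.
Lemma lsum_ext_in (f g : T -> R) l : (forall x, In x l -> f x = g x) -> lsum f l = lsum g l.
Proof. induction l; intro H; [reflexivity|]. rewrite !lsum_cons, H, IHl; simpl; auto.
  intros; apply H; simpl; auto. Qed.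
Lemma lsum_plus (f g : T -> R) l : lsum (fun x => f x + g x) l = lsum f l + lsum g l.
Proof. induction l; [simpl; unfold lsum; simpl; lra|]. rewrite !lsum_cons, IHl; lra. Qed.
Lemma lsum_minus (f g : T -> R) l : lsum (fun x => f x - g x) l = lsum f l - lsum g l.
Proof. induction l; [simpl; unfold lsum; simpl; lra|]. rewrite !lsum_cons, IHl; lra. Qed.
Lemma lsum_scal (f : T -> R) k l : lsum (fun x => k * f x) l = k * lsum f l.
Proof. induction l; [unfold lsum; simpl; lra|]. rewrite !lsum_cons, IHl; lra. Qed.
Lemma lsum_zero (f : T -> R) l : (forall x, In x l -> f x = 0) -> lsum f l = 0.
Proof. intro H. rewrite (lsum_ext_in f (fun _ => 0)) by auto.
  induction l; [reflexivity|]. rewrite lsum_cons, IHl; [lra|]. intros; apply H; simpl; auto. Qed.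
Lemma lsum_ge0 (f : T -> R) l : (forall x, In x l -> 0 <= f x) -> 0 <= lsum f l.
Proof. induction l; intro H; [unfold lsum; simpl; lra|]. rewrite lsum_cons.
  assert (0 <= f a) by (apply H; simpl; auto). assert (0 <= lsum f l) by (apply IHl; intros; apply H; simpl; auto). lra. Qed.
Lemma lsum_le (f g : T -> R) l : (forall x, In x l -> f x <= g x) -> lsum f l <= lsum g l.
Proof. induction l; intro H; [unfold lsum; simpl; lra|]. rewrite !lsum_cons.
  assert (f a <= g a) by (apply H; simpl; auto). assert (lsum f l <= lsum g l) by (apply IHl; intros; apply H; simpl; auto). lra. Qed.
Lemma lsum_in_le (f : T -> R) l x : (forall y, In y l -> 0 <= f y) -> In x l -> f x <= lsum f l.
Proof. induction l; intros H Hx; [destruct Hx|]. rewrite lsum_cons. destruct Hx as [<-|Hx].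
  - assert (0 <= lsum f l) by (apply lsum_ge0; intros; apply H; simpl; auto). lra.
  - assert (0 <= f a) by (apply H; simpl; auto). assert (f x <= lsum f l) by (apply IHl; auto; intros; apply H; simpl; auto). lra. Qed.
Lemma lsum_perm (f : T -> R) l1 l2 : Permutation l1 l2 -> lsum f l1 = lsum f l2.
Proof. induction 1; rewrite ?lsum_cons.
  - reflexivity.
  - rewrite IHPermutation; reflexivity.
  - lra.
  - congruence. Qed.
Lemma lsum_filter (f : T -> R) p l : lsum f (filter p l) = lsum (fun x => if p x then f x else 0) l.
Proof. induction l; [reflexivity|]. cbn [filter]. rewrite (lsum_cons _ a). destruct (p a); rewrite ?lsum_cons, IHl; lra. Qed.
End LS.

Lemma lsum_map {T U} (f : U -> R) (g : T -> U) l : lsum f (map g l) = lsum (fun x => f (g x)) l.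
Proof. induction l; [reflexivity|]. cbn [map]. rewrite !lsum_cons, IHl; reflexivity. Qed.
Lemma lsum_flat_map {T U} (f : U -> R) (g : T -> list U) l :
  lsum f (flat_map g l) = lsum (fun x => lsum f (g x)) l.
Proof. induction l; [reflexivity|]. cbn [flat_map]. rewrite lsum_app, lsum_cons, IHl; reflexivity. Qed.
Lemma lsum_swap {T U} (f : T -> U -> R) l1 l2 :
  lsum (fun x => lsum (fun y => f x y) l2) l1 = lsum (fun y => lsum (fun x => f x y) l1) l2.
Proof. induction l1.
  - rewrite lsum_nil, lsum_zero; [reflexivity|]. intros; reflexivity.
  - rewrite lsum_cons, IHl1, <- lsum_plus. apply lsum_ext_in; intros; rewrite lsum_cons; reflexivity. Qed.

Lemma lsum_ind_single {K} (Ks : list K) k0 y : NoDup Ks ->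
  lsum (fun k => ind (k0 = k) y) Ks = ind (In k0 Ks) y.
Proof. induction Ks; intro Hn.
  - rewrite ind_F by (simpl; tauto); reflexivity.
  - inversion Hn; subst. rewrite lsum_cons, IHKs by auto.
    destruct (classic (k0 = a)) as [->|Hne].
    + rewrite ind_T by reflexivity. rewrite (ind_F (In a Ks)) by auto. rewrite ind_T by (simpl; auto). lra.
    + rewrite (ind_F (k0 = a)) by auto. rewrite Rplus_0_l. apply ind_iff. simpl. split; [auto|intros [H|H]; [congruence|auto]]. Qed.

Lemma fiber {T K} (g : T -> K) (w : T -> R) L Ks : NoDup Ks ->
  lsum (fun c => ind (In (g c) Ks) (w c)) L =
  lsum (fun k => lsum (fun c => ind (g c = k) (w c)) L) Ks.
Proof. intro Hn. rewrite lsum_swap. apply lsum_ext_in; intros c _.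
  rewrite lsum_ind_single; auto. Qed.

Definition decb (P : Prop) : bool := if excluded_middle_informative P then true else false.
Lemma decb_true (P : Prop) : decb P = true <-> P.
Proof. unfold decb; destruct excluded_middle_informative; split; intros; auto; try discriminate; tauto. Qed.
Definition deceq {K} (x y : K) : {x = y} + {x <> y} := excluded_middle_informative (x = y).

Lemma keyG {T1 T2 K} (L1 : list T1) (L2 : list T2) (g1 : T1 -> K) g2 w1 w2 :
  (forall k, lsum (fun c => ind (g1 c = k) (w1 c)) L1 = lsum (fun c => ind (g2 c = k) (w2 c)) L2) ->
  forall Q : K -> Prop,
  lsum (fun c => ind (Q (g1 c)) (w1 c)) L1 = lsum (fun c => ind (Q (g2 c)) (w2 c)) L2.
Proof.
  intros H Q.
  set (Ks := nodup deceq (filter (fun k => decb (Q k)) (map g1 L1 ++ map g2 L2))).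
  assert (HN : NoDup Ks) by apply NoDup_nodup.
  assert (HI : forall k, In k Ks <-> Q k /\ In k (map g1 L1 ++ map g2 L2)).
  { intro k. unfold Ks. rewrite nodup_In, filter_In, decb_true. tauto. }
  transitivity (lsum (fun c => ind (In (g1 c) Ks) (w1 c)) L1).
  { apply lsum_ext_in; intros c Hc. apply ind_iff. rewrite HI. rewrite in_app_iff.
    split; [intro; split; auto; left; apply in_map; auto | tauto]. }
  transitivity (lsum (fun c => ind (In (g2 c) Ks) (w2 c)) L2).
  2:{ apply lsum_ext_in; intros c Hc. apply ind_iff. rewrite HI. rewrite in_app_iff.
    split; [tauto | intro; split; auto; right; apply in_map; auto]. }
  rewrite !fiber by auto. apply lsum_ext_in; auto.
Qed.

Lemma PrSet_list {A X} (P : list (step A X) -> Prop) L : NoDup L ->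
  (forall c, P c -> In c L) -> PrSet P (lsum (fun c => ind (P c) (comp_pr c)) L).
Proof.
  intros HN HP. exists (filter (fun c => decb (P c)) L). split; [apply NoDup_filter; auto|].
  split.
  - intro c. rewrite filter_In, decb_true. split; [auto| tauto].
  - rewrite lsum_filter. apply lsum_ext_in; intros c _. unfold ind, decb.
    destruct excluded_middle_informative; reflexivity.
Qed.

Lemma PrSet_unique {A X} (P : list (step A X) -> Prop) r1 r2 : PrSet P r1 -> PrSet P r2 -> r1 = r2.
Proof.
  intros [l1 [N1 [I1 ->]]] [l2 [N2 [I2 ->]]]. apply lsum_perm. apply NoDup_Permutation; auto.
  intro x. rewrite <- I1, I2. tauto.
Qed.

Section Res.
Variables (A X : Type) (tr : transrel A X).
Hypothesis Hpts : is_PTS tr.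
Hypothesis Hdet : forall z a1 pi1 a2 pi2, tr z a1 pi1 -> tr z a2 pi2 -> a1 = a2 /\ pi1 = pi2.

Definition next (z : X) : option (A * (X -> R)) :=
  match excluded_middle_informative (exists p : A * (X -> R), tr z (fst p) (snd p)) with
  | left H => Some (proj1_sig (constructive_indefinite_description _ H))
  | right _ => None end.

Lemma next_Some z a pi : next z = Some (a, pi) -> tr z a pi.
Proof. unfold next. destruct excluded_middle_informative; [|discriminate].
  destruct constructive_indefinite_description as [[a' pi'] H]; simpl. intro E; inversion E; subst; auto. Qed.
Lemma next_None z : next z = None -> forall a pi, ~ tr z a pi.
Proof. unfold next. destruct excluded_middle_informative; [discriminate|].
  intros _ a pi H. apply n. exists (a, pi); auto. Qed.
Lemma next_tr z a pi : tr z a pi -> next z = Some (a, pi).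
Proof. intro H. destruct (next z) as [[a' pi']|] eqn:E.
  - apply next_Some in E. destruct (Hdet _ _ _ _ _ H E); subst; auto.
  - exfalso; eapply next_None; eauto. Qed.

Definition spos (pi : X -> R) : list X :=
  match excluded_middle_informative (@is_fdist X pi) with
  | left H => filter (fun x => if Rlt_dec 0 (pi x) then true else false)
                (proj1_sig (constructive_indefinite_description _ (proj2 H)))
  | right _ => [] end.

Lemma spos_spec (pi : X -> R) : is_fdist pi ->
  NoDup (spos pi) /\ (forall x, In x (spos pi) <-> 0 < pi x) /\ lsum pi (spos pi) = 1.
Proof.
  intro Hf. unfold spos. destruct excluded_middle_informative as [H|H]; [|tauto].
  destruct constructive_indefinite_description as [l [Hn [Hi Hs]]]; simpl.
  split; [apply NoDup_filter; auto|]. split.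
  - intro x. rewrite filter_In. destruct (Rlt_dec 0 (pi x)) as [h|h]; split; try tauto.
    + intros _; split; auto. apply Hi. lra.
    + intros [_ F]; discriminate.
  - rewrite lsum_filter. rewrite <- Hs. apply lsum_ext_in. intros x _.
    destruct (Rlt_dec 0 (pi x)); auto. destruct H as [H0 _]. specialize (H0 x). lra.
Qed.

Lemma fdist_pos (pi : X -> R) : is_fdist pi -> exists x, 0 < pi x.
Proof. intro Hf. destruct (spos_spec pi Hf) as [_ [Hi Hs]].
  destruct (spos pi) as [|x l] eqn:E. { rewrite lsum_nil in Hs; lra. }
  exists x. apply Hi. simpl; auto. Qed.

Fixpoint En (n : nat) (z : X) : list (list (step A X)) :=
  match n with
  | O => [[]]
  | S m => [] :: match next z with
           | None => []
           | Some p => flat_map (fun x => map (cons (fst p, snd p, x)) (En m x)) (spos (snd p))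
           end
  end.

Definition bounded (n : nat) (z : X) : Prop :=
  forall c, is_comp tr z c -> (length c <= n)%nat.

Lemma bounded_step m z a pi x : bounded (S m) z -> tr z a pi -> 0 < pi x -> bounded m x.
Proof. intros Hb Ht Hp c Hc. specialize (Hb ((a, pi, x) :: c)). simpl in Hb.
  assert (S (length c) <= S m)%nat by auto. lia. Qed.

Lemma bounded0_next z : bounded 0 z -> next z = None.
Proof. intro Hb. destruct (next z) as [[a pi]|] eqn:E; auto.
  apply next_Some in E. destruct (fdist_pos pi (Hpts _ _ _ E)) as [x Hx].
  specialize (Hb [(a, pi, x)]). simpl in Hb. assert (1 <= 0)%nat by auto. lia. Qed.

Lemma En_comp n z c : In c (En n z) -> is_comp tr z c.
Proof.
  revert z c; induction n; intros z c H; simpl in H.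
  - destruct H as [<-|[]]; simpl; auto.
  - destruct H as [<-|H]; [simpl; auto|].
    destruct (next z) as [[a pi]|] eqn:E; [|destruct H].
    apply in_flat_map in H. destruct H as [x [Hx Hc]]. apply in_map_iff in Hc.
    destruct Hc as [c' [<- Hc']]. simpl.
    apply next_Some in E. destruct (spos_spec pi (Hpts _ _ _ E)) as [_ [Hi _]].
    split; auto. split; [apply Hi; auto|]. eapply IHn; eauto.
Qed.

Lemma En_complete n z c : bounded n z -> is_comp tr z c -> In c (En n z).
Proof.
  revert z c; induction n; intros z c Hb Hc.
  - destruct c; simpl; auto. specialize (Hb _ Hc). simpl in Hb. lia.
  - destruct c as [|[[a pi] x] c]; simpl; auto. right.
    destruct Hc as [Ht [Hp Hc]]. rewrite (next_tr _ _ _ Ht). simpl.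
    apply in_flat_map. exists x. destruct (spos_spec pi (Hpts _ _ _ Ht)) as [_ [Hi _]].
    split; [apply Hi; auto|]. apply in_map. eapply IHn; eauto. eapply bounded_step; eauto.
Qed.

Lemma NoDup_flat_map {T U} (g : T -> list U) l :
  NoDup l -> (forall x, In x l -> NoDup (g x)) ->
  (forall x y u, In x l -> In y l -> In u (g x) -> In u (g y) -> x = y) ->
  NoDup (flat_map g l).
Proof.
  induction l; intros Hn Hg Hd; simpl; [constructor|]. inversion Hn; subst.
  apply NoDup_app; [apply Hg; simpl; auto| apply IHl; auto; [intros; apply Hg; simpl; auto| intros; eapply Hd; simpl; eauto]|].
  intros u Hu Hu'. apply in_flat_map in Hu'. destruct Hu' as [y [Hy Hu']].
  assert (a = y) by (eapply Hd; simpl; eauto). subst. auto.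
Qed.

Lemma En_NoDup n z : NoDup (En n z).
Proof.
  revert z; induction n; intro z; simpl.
  - constructor; [simpl; auto| constructor].
  - destruct (next z) as [[a pi]|] eqn:E; [|constructor; [simpl; auto| constructor]].
    apply next_Some in E. destruct (spos_spec pi (Hpts _ _ _ E)) as [Hn _]. simpl.
    constructor.
    + intro H. apply in_flat_map in H. destruct H as [x [_ H]]. apply in_map_iff in H.
      destruct H as [? [H _]]; discriminate.
    + apply NoDup_flat_map; auto.
      * intros x _. apply FinFun.Injective_map_NoDup; auto. intros u v H; inversion H; auto.
      * intros x y u _ _ H1 H2. apply in_map_iff in H1, H2.
        destruct H1 as [? [<- _]]. destruct H2 as [? [H _]]. inversion H; auto.
Qed.

Lemma lsum_En_S m z (f : list (step A X) -> R) :
  lsum f (En (S m) z) = f [] + match next z with None => 0 | Some (a, pi) =>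
     lsum (fun x => lsum (fun c => f ((a, pi, x) :: c)) (En m x)) (spos pi) end.
Proof.
  cbn [En]. rewrite lsum_cons. destruct (next z) as [[a pi]|]; [|reflexivity].
  cbn [fst snd]. rewrite lsum_flat_map. f_equal. apply lsum_ext_in; intros.
  rewrite lsum_map; reflexivity.
Qed.

Lemma max_nil z : comp_max tr z [] <-> next z = None.
Proof.
  split.
  - intros [_ H]. destruct (next z) as [[a pi]|] eqn:E; auto. exfalso. apply H.
    apply next_Some in E. destruct (fdist_pos pi (Hpts _ _ _ E)) as [x Hx].
    exists [(a, pi, x)]. split; [discriminate|]. simpl; auto.
  - intro E. split; [simpl; auto|]. intros [d [Hd Hc]]. destruct d as [|[[a pi] x] d]; [auto|].
    simpl in Hc. eapply next_None; eauto. apply Hc.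
Qed.

Lemma max_cons z a pi x c : tr z a pi -> 0 < pi x ->
  (comp_max tr z ((a, pi, x) :: c) <-> comp_max tr x c).
Proof.
  intros Ht Hp. unfold comp_max. simpl. split.
  - intros [[_ [_ Hc]] H]. split; auto. intros [d [Hd Hc']]. apply H. exists d; auto.
  - intros [Hc H]. split; auto. intros [d [Hd Hc']]. apply H. exists d; tauto.
Qed.

Lemma comp_pr_pos z c : is_comp tr z c -> 0 < comp_pr c.
Proof.
  revert z; induction c as [|[[a pi] x] c IH]; intros z H.
  - unfold comp_pr; simpl; lra.
  - destruct H as [_ [Hp Hc]]. change (0 < pi x * comp_pr c). apply Rmult_lt_0_compat; eauto.
Qed.

Lemma comp_pr_cons (a : A) (pi : X -> R) x (c : list (step A X)) : comp_pr ((a, pi, x) :: c) = pi x * comp_pr c.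
Proof. reflexivity. Qed.
Lemma comp_tr_cons (a : A) (pi : X -> R) x (c : list (step A X)) : comp_tr ((a, pi, x) :: c) = a :: comp_tr c.
Proof. reflexivity. Qed.
Lemma comp_pr_nil : comp_pr (@nil (step A X)) = 1.
Proof. reflexivity. Qed.
Lemma ind_0 (P : Prop) : ind P 0 = 0.
Proof. unfold ind; destruct excluded_middle_informative; reflexivity. Qed.

Lemma total n : forall z, bounded n z ->
  lsum (fun c => ind (comp_max tr z c) (comp_pr c)) (En n z) = 1.
Proof.
  induction n; intros z Hb.
  - cbn [En]. rewrite lsum_cons, lsum_nil. rewrite ind_T by (apply max_nil, bounded0_next; auto).
    rewrite comp_pr_nil; lra.
  - rewrite lsum_En_S. destruct (next z) as [[a pi]|] eqn:E.
    + rewrite ind_F by (rewrite max_nil; congruence). apply next_Some in E.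
      destruct (spos_spec pi (Hpts _ _ _ E)) as [_ [Hi Hs]].
      rewrite <- Hs. rewrite Rplus_0_l. apply lsum_ext_in. intros x Hx. apply Hi in Hx.
      transitivity (pi x * 1); [|ring].
      rewrite <- (IHn x) by (eapply bounded_step; eauto). rewrite <- lsum_scal.
      apply lsum_ext_in; intros c _. cbv beta. rewrite comp_pr_cons, ind_mult. f_equal.
      apply ind_iff. apply max_cons; auto.
    + rewrite ind_T by (apply max_nil; auto). rewrite comp_pr_nil; lra.
Qed.

Lemma P0 n z : lsum (fun c => ind (comp_tr c = []) (comp_pr c)) (En n z) = 1.
Proof.
  destruct n.
  - cbn [En]. rewrite lsum_cons, lsum_nil, ind_T by reflexivity. rewrite comp_pr_nil; lra.
  - rewrite lsum_En_S, ind_T by reflexivity. rewrite comp_pr_nil.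
    destruct (next z) as [[a pi]|]; [|lra].
    rewrite lsum_zero; [lra|]. intros x _. apply lsum_zero. intros c _. apply ind_F.
    rewrite comp_tr_cons; discriminate.
Qed.

Lemma key2 n : forall z, bounded n z -> forall al,
  lsum (fun c => ind (comp_tr c = al) (comp_pr c)) (En n z) =
  lsum (fun c => ind (exists d, comp_tr c = al ++ d) (ind (comp_max tr z c) (comp_pr c))) (En n z).
Proof.
  induction n; intros z Hb al.
  - cbn [En]. rewrite !lsum_cons, !lsum_nil. destruct al as [|b al].
    + rewrite ind_T by reflexivity. rewrite ind_T by (exists []; reflexivity).
      rewrite ind_T by (apply max_nil, bounded0_next; auto). reflexivity.
    + rewrite ind_F by (simpl; discriminate). rewrite ind_F; [reflexivity|].
      intros [d Hd]; simpl in Hd; discriminate.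
  - destruct al as [|b al].
    + rewrite P0. rewrite (lsum_ext_in _ (fun c => ind (comp_max tr z c) (comp_pr c))).
      * symmetry; apply total; auto.
      * intros c _. apply ind_T. exists (comp_tr c); reflexivity.
    + rewrite !lsum_En_S. rewrite ind_F by (simpl; discriminate).
      rewrite (ind_F (exists d, _)) by (intros [d Hd]; simpl in Hd; discriminate).
      f_equal. destruct (next z) as [[a pi]|] eqn:E; auto.
      apply next_Some in E. destruct (spos_spec pi (Hpts _ _ _ E)) as [_ [Hi _]].
      apply lsum_ext_in; intros x Hx. apply Hi in Hx.
      destruct (classic (a = b)) as [<-|Hab].
      * transitivity (pi x * lsum (fun c => ind (comp_tr c = al) (comp_pr c)) (En n x)).
        { rewrite <- lsum_scal. apply lsum_ext_in; intros c _. cbv beta.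
          rewrite comp_pr_cons, comp_tr_cons, ind_mult. f_equal. apply ind_iff.
          split; [intro H; injection H; auto| intros ->; reflexivity]. }
        rewrite IHn by (eapply bounded_step; eauto).
        rewrite <- lsum_scal. apply lsum_ext_in; intros c _. cbv beta.
        rewrite comp_pr_cons, comp_tr_cons, !ind_mult. f_equal.
        rewrite (ind_iff (comp_max tr z _) (comp_max tr x c)) by (apply max_cons; auto).
        apply ind_iff. split; intros [d H]; exists d; [rewrite H; reflexivity| injection H; auto].
      * rewrite !lsum_zero; auto; intros c _; cbv beta; rewrite comp_tr_cons.
        -- apply ind_F. intros [d H]. injection H; auto.
        -- apply ind_F. intro H; injection H; auto.
Qed.

Lemma key1 n : forall z, bounded n z -> forall al,
  lsum (fun c => ind (comp_tr c = al) (ind (comp_max tr z c) (comp_pr c))) (En n z) =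
  lsum (fun c => ind (comp_tr c = al) (comp_pr c)) (En n z) -
  lsum (fun c => ind (exists b, comp_tr c = al ++ [b]) (comp_pr c)) (En n z).
Proof.
  induction n; intros z Hb al.
  - cbn [En]. rewrite !lsum_cons, !lsum_nil.
    rewrite (ind_F (exists b, _)) by (intros [b H]; destruct al; simpl in H; discriminate).
    destruct al.
    + rewrite !ind_T; [|reflexivity| apply max_nil, bounded0_next; auto|reflexivity]. lra.
    + rewrite !ind_F by (simpl; discriminate). lra.
  - rewrite !lsum_En_S.
    rewrite (ind_F (exists b, _)) by (intros [b H]; destruct al; simpl in H; discriminate).
    destruct (next z) as [[a pi]|] eqn:E.
    + assert (Hnm : ~ comp_max tr z []) by (rewrite max_nil; congruence).
      rewrite (ind_F (comp_max tr z [])) by auto. rewrite ind_0.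
      apply next_Some in E. destruct (spos_spec pi (Hpts _ _ _ E)) as [_ [Hi Hs]].
      destruct al as [|b al].
      * rewrite ind_T by reflexivity. rewrite comp_pr_nil.
        rewrite (lsum_zero _ (spos pi)).
        2:{ intros x _. apply lsum_zero. intros c _. cbv beta. apply ind_F. rewrite comp_tr_cons; discriminate. }
        rewrite (lsum_zero (fun x => lsum (fun c => ind (comp_tr _ = []) _) _) (spos pi)).
        2:{ intros x _. apply lsum_zero. intros c _. cbv beta. apply ind_F. rewrite comp_tr_cons; discriminate. }
        enough (lsum (fun x => lsum (fun c => ind (exists b, comp_tr ((a, pi, x) :: c) = [] ++ [b]) (comp_pr ((a, pi, x) :: c))) (En n x)) (spos pi) = 1) by lra.
        rewrite <- Hs. apply lsum_ext_in. intros x Hx.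
        transitivity (pi x * lsum (fun c => ind (comp_tr c = []) (comp_pr c)) (En n x)).
        2:{ rewrite P0; ring. }
        rewrite <- lsum_scal. apply lsum_ext_in; intros c _.
        rewrite comp_pr_cons, comp_tr_cons, ind_mult. f_equal. apply ind_iff. simpl.
        split; [intros [b H]; injection H; auto| intro H; exists a; rewrite H; reflexivity].
      * rewrite ind_F by (simpl; discriminate).
        rewrite !Rplus_0_l, <- lsum_minus. apply lsum_ext_in; intros x Hx. apply Hi in Hx.
        destruct (classic (a = b)) as [<-|Hab].
        -- transitivity (pi x * lsum (fun c => ind (comp_tr c = al) (ind (comp_max tr x c) (comp_pr c))) (En n x)).
           { rewrite <- lsum_scal. apply lsum_ext_in; intros c _. cbv beta.
             rewrite comp_pr_cons, comp_tr_cons, !ind_mult. f_equal.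
             rewrite (ind_iff (comp_max tr z _) (comp_max tr x c)) by (apply max_cons; auto).
             apply ind_iff. split; [intro H; injection H; auto| intros ->; reflexivity]. }
           rewrite IHn by (eapply bounded_step; eauto).
           rewrite Rmult_minus_distr_l, <- !lsum_scal. f_equal; apply lsum_ext_in; intros c _; cbv beta;
             rewrite comp_pr_cons, comp_tr_cons, ind_mult; f_equal; apply ind_iff.
           ++ split; [intros ->; reflexivity| intro H; injection H; auto].
           ++ split; intros [d H]; exists d; [rewrite H; reflexivity| injection H; auto].
        -- rewrite !lsum_zero; auto; try lra; intros c _; cbv beta; rewrite comp_tr_cons.
           all: apply ind_F; intro H; lazymatch type of H with ex _ => destruct H as [d H] | _ => idtac end; injection H; intros; congruence.
    + destruct al.
      * rewrite (ind_T (comp_max _ _ _)) by (apply max_nil; auto).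
        rewrite ind_T by reflexivity. rewrite comp_pr_nil; lra.
      * rewrite !ind_F by (simpl; discriminate). lra.
Qed.

End Res.

Fixpoint ftr {A} (f : tformula A) : list A :=
  match f with TTop _ => [] | TDiam a f' => a :: ftr f' end.
Definition form_of {A} (al : list A) : tformula A := fold_right (@TDiam A) (TTop A) al.
Lemma ftr_form {A} (al : list A) : ftr (form_of al) = al.
Proof. induction al; simpl; auto. unfold form_of in *; simpl; rewrite IHal; auto. Qed.

Lemma csat_iff {A X} (f : tformula A) : forall (c : list (step A X)),
  (csat c f /\ length c = depth f) <-> comp_tr c = ftr f.
Proof.
  induction f as [|a f IH]; intros [|[[a' pi] x] c]; simpl.
  - tauto.
  - split; [intros [_ H]; discriminate| discriminate].
  - split; [tauto| discriminate].
  - specialize (IH c). split.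
    + intros [[-> Hc] Hl]. f_equal. apply IH. split; auto.
    + intro H. injection H; intros H1 H2. subst. apply IH in H1. destruct H1. split; auto.
Qed.

Section Gen.
Variables (A X : Type) (tr : transrel A X).
Hypothesis Hpts : is_PTS tr.
Hypothesis Hdet : forall z a1 pi1 a2 pi2, tr z a1 pi1 -> tr z a2 pi2 -> a1 = a2 /\ pi1 = pi2.

Definition Pv n z al := lsum (fun c => ind (comp_tr c = al) (comp_pr c)) (En A X tr n z).
Definition Mv n z al := lsum (fun c => ind (comp_tr c = al) (ind (comp_max tr z c) (comp_pr c))) (En A X tr n z).

Lemma F1 n z al : bounded A X tr n z -> PrSet (Ctr tr z al) (Pv n z al).
Proof.
  intro Hb. replace (Pv n z al) with (lsum (fun c => ind (Ctr tr z al c) (comp_pr c)) (En A X tr n z)).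
  - apply PrSet_list; [apply En_NoDup; auto|]. intros c [Hc _]. apply En_complete; auto.
  - unfold Pv. apply lsum_ext_in; intros c Hc. apply ind_iff. unfold Ctr.
    pose proof (En_comp A X tr Hpts n z c Hc). tauto.
Qed.

Lemma F2 n z (f : tformula A) : bounded A X tr n z ->
  PrSet (fun c => comp_max tr z c /\ csat c f /\ length c = depth f) (Mv n z (ftr f)).
Proof.
  intro Hb. replace (Mv n z (ftr f)) with
    (lsum (fun c => ind (comp_max tr z c /\ csat c f /\ length c = depth f) (comp_pr c)) (En A X tr n z)).
  - apply PrSet_list; [apply En_NoDup; auto|]. intros c [[Hc _] _]. apply En_complete; auto.
  - unfold Mv. apply lsum_ext_in; intros c Hc. rewrite <- ind_and. apply ind_iff.
    rewrite <- (csat_iff f c). tauto.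
Qed.

Lemma Mv_ge0 n z al : 0 <= Mv n z al.
Proof. apply lsum_ge0; intros c Hc. apply ind_ge0, ind_ge0. left.
  eapply comp_pr_pos. eapply En_comp; eauto. Qed.
End Gen.

Section Main.
Variables (St A : Type) (trans : transrel A St).

Lemma reach_snoc u v w : reach trans u v -> succ trans v w -> reach trans u w.
Proof. induction 1; intro Hs. - econstructor; [exact Hs| constructor]. - econstructor; eauto. Qed.
Lemma reach_trans u v w : reach trans u v -> reach trans v w -> reach trans u w.
Proof. induction 1; auto. intro; econstructor; eauto. Qed.
Lemma reach_plus_reach u w : reach_plus trans u w -> reach trans u w.
Proof. intros [v [H1 H2]]; econstructor; eauto. Qed.

Lemma path_nodup s (Hs : finite_proc trans s) (Z : resolution trans s) :
  forall c z, is_comp (rtrans Z) z c -> reach trans s (rcorr Z z) ->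
  NoDup (rcorr Z z :: map (fun st => rcorr Z (snd st)) c) /\
  (forall y, In y (map (fun st => rcorr Z (snd st)) c) -> reach_plus trans (rcorr Z z) y).
Proof.
  destruct Hs as [_ [_ Hacyc]].
  induction c as [|[[a pi] x] c IH]; intros z Hc Hr.
  - split; [constructor; [simpl; auto| constructor] | simpl; tauto].
  - destruct Hc as [Ht [Hp Hc]].
    destruct (r_match Z _ _ _ Ht) as [pi' [Ht' Heq]].
    assert (Hsu : succ trans (rcorr Z z) (rcorr Z x)).
    { exists a, pi'; split; auto. rewrite <- Heq; auto. }
    destruct (IH x Hc (reach_snoc _ _ _ Hr Hsu)) as [Hn Hy].
    assert (Hall : forall y, In y (rcorr Z x :: map (fun st => rcorr Z (snd st)) c) ->
                   reach_plus trans (rcorr Z z) y).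
    { intros y [<-|Hin].
      - exists (rcorr Z x); split; auto; constructor.
      - exists (rcorr Z x); split; auto. apply reach_plus_reach; auto. }
    cbn [map snd]. split; [|exact Hall].
    constructor; auto. intro Hin. apply (Hacyc _ Hr). apply Hall; auto.
Qed.

Lemma res_bounded s (Hs : finite_proc trans s) (Z : resolution trans s) :
  exists n, bounded _ _ (rtrans Z) n (rinit Z).
Proof.
  pose proof Hs as [[L HL] _].
  exists (length L). intros c Hc.
  assert (Hr : reach trans s (rcorr Z (rinit Z))) by (rewrite r_init_corr; constructor).
  destruct (path_nodup s Hs Z c _ Hc Hr) as [Hn Hy].
  assert (Hinc : incl (rcorr Z (rinit Z) :: map (fun st => rcorr Z (snd st)) c) L).
  { intros y [<-|Hin]; apply HL; auto.
    eapply reach_trans; [exact Hr| apply reach_plus_reach; auto]. }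
  pose proof (NoDup_incl_length Hn Hinc) as H. cbn [length] in H. rewrite length_map in H. apply Nat.lt_le_incl; exact H.
Qed.

End Main.

Section Dirs.
Variables (St A : Type) (trans : transrel A St).

Lemma dir1 s t (Hs : finite_proc trans s) (Ht : finite_proc trans t) :
  res_trace_matched trans s t -> forall F, Lset trans s F -> Lset trans t F.
Proof.
  intros H F [Hwf [Zs HZs]]. destruct (H Zs) as [Zt HZt].
  destruct (res_bounded _ _ _ s Hs Zs) as [ns Hns].
  destruct (res_bounded _ _ _ t Ht Zt) as [nt Hnt].
  assert (HP : forall al, Pv _ _ (rtrans Zs) ns (rinit Zs) al = Pv _ _ (rtrans Zt) nt (rinit Zt) al).
  { intro al. destruct (HZt al) as [r [H1 H2]].
    pose proof (F1 _ _ _ (r_pts Zs) (r_det Zs) ns _ al Hns) as G1.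
    pose proof (F1 _ _ _ (r_pts Zt) (r_det Zt) nt _ al Hnt) as G2.
    pose proof (PrSet_unique _ _ _ H1 G1). pose proof (PrSet_unique _ _ _ H2 G2). congruence. }
  assert (HM : forall al, Mv _ _ (rtrans Zs) ns (rinit Zs) al = Mv _ _ (rtrans Zt) nt (rinit Zt) al).
  { intro al. unfold Mv. rewrite (key1 _ _ _ (r_pts Zs)) by auto. rewrite (key1 _ _ _ (r_pts Zt)) by auto.
    pose proof (HP al) as Hal. unfold Pv in Hal. rewrite Hal. f_equal.
    pose proof (keyG (En _ _ (rtrans Zs) ns (rinit Zs)) (En _ _ (rtrans Zt) nt (rinit Zt)) (@comp_tr _ _) (@comp_tr _ _) (@comp_pr _ _) (@comp_pr _ _) HP (fun be => exists b, be = al ++ [b])) as K.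
    cbv beta in K. exact K. }
  split; [exact Hwf|]. exists Zt. intros r f Hin.
  pose proof (HZs r f Hin) as G.
  pose proof (F2 _ _ _ (r_pts Zs) (r_det Zs) ns _ f Hns) as G1.
  pose proof (F2 _ _ _ (r_pts Zt) (r_det Zt) nt _ f Hnt) as G2.
  rewrite (PrSet_unique _ _ _ G G1), HM. exact G2.
Qed.

Lemma dir2 s t (Hs : finite_proc trans s) (Ht : finite_proc trans t) :
  (forall F, Lset trans s F -> Lset trans t F) -> res_trace_matched trans s t.
Proof.
  intros H Zs.
  destruct (res_bounded _ _ _ s Hs Zs) as [ns Hns].
  set (Es := En _ _ (rtrans Zs) ns (rinit Zs)).
  set (Ms := Mv _ _ (rtrans Zs) ns (rinit Zs)).
  set (K0 := nodup deceq (map (@comp_tr _ _) Es)).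
  set (K := filter (fun be => decb (0 < Ms be)) K0).
  assert (HK : forall be, In be K <-> In be (map (@comp_tr _ _) Es) /\ 0 < Ms be).
  { intro be. unfold K, K0. rewrite filter_In, decb_true, nodup_In. tauto. }
  assert (HnK : NoDup K) by (apply NoDup_filter, NoDup_nodup).
  assert (Hge : forall be, 0 <= Ms be) by (intro; apply Mv_ge0; apply r_pts).
  assert (HMsK : forall be, ~ In be K -> Ms be = 0).
  { intros be Hn. destruct (Hge be) as [Hlt|]; auto. exfalso. apply Hn, HK. split; auto.
    destruct (classic (exists c, In c Es /\ comp_tr c = be)) as [[c [Hc Hb]]|Hno].
    - rewrite <- Hb; apply in_map; auto.
    - exfalso. assert (Ms be = 0); [|lra]. unfold Ms, Mv. apply lsum_zero; intros c Hc.
      apply ind_F. intro; apply Hno; eauto. }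
  assert (Hsum : lsum Ms K = 1).
  { pose proof (fiber (@comp_tr _ _) (fun c => ind (comp_max (rtrans Zs) (rinit Zs) c) (comp_pr c)) Es K HnK) as Hf.
    cbv beta in Hf.
    change (lsum Ms K) with (lsum (fun k => lsum (fun c => ind (comp_tr c = k) (ind (comp_max (rtrans Zs) (rinit Zs) c) (comp_pr c))) Es) K).
    rewrite <- Hf.
    rewrite <- (total _ _ _ (r_pts Zs) ns (rinit Zs) Hns). apply lsum_ext_in. intros c Hc.
    destruct (classic (comp_max (rtrans Zs) (rinit Zs) c)) as [Hm|Hm].
    - apply ind_T. apply HK. split; [apply in_map; auto|].
      apply Rlt_le_trans with (comp_pr c).
      + eapply comp_pr_pos. eapply En_comp; [apply r_pts| exact Hc].
      + unfold Ms, Mv.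
        pose proof (lsum_in_le (fun c0 => ind (comp_tr c0 = comp_tr c) (ind (comp_max (rtrans Zs) (rinit Zs) c0) (comp_pr c0))) (En _ _ (rtrans Zs) ns (rinit Zs)) c) as L.
        cbv beta in L. rewrite (ind_T (comp_tr c = comp_tr c)), (ind_T (comp_max _ _ c)) in L by auto.
        apply L; auto. intros y Hy. apply ind_ge0, ind_ge0. left.
        eapply comp_pr_pos. eapply En_comp; [apply r_pts| exact Hy].
    - rewrite (ind_F (comp_max _ _ _)) by auto. apply ind_0. }
  set (F := map (fun be => (Ms be, form_of be)) K).
  assert (HinF : forall r f, In (r, f) F -> exists be, In be K /\ r = Ms be /\ f = form_of be).
  { intros r f Hin. unfold F in Hin. apply in_map_iff in Hin. destruct Hin as [be [E Hb]].
    injection E; intros; subst. eauto. }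
  assert (Hwf : wf_tdformula F).
  { split; [|split; [|split]].
    - intro E. unfold F in E. apply map_eq_nil in E. rewrite E in Hsum. rewrite lsum_nil in Hsum. lra.
    - unfold F. rewrite map_map. cbn [snd]. apply FinFun.Injective_map_NoDup; auto.
      intros x y E. rewrite <- (ftr_form x), <- (ftr_form y), E. reflexivity.
    - intros r f Hin. destruct (HinF r f Hin) as [be [Hb [-> _]]]. split.
      + apply HK; auto.
      + rewrite <- Hsum. apply lsum_in_le; auto.
    - unfold F. rewrite lsum_map. cbn [fst]. exact Hsum. }
  assert (HsF : Lset trans s F).
  { split; auto. exists Zs. intros r f Hin. destruct (HinF r f Hin) as [be [Hb [-> ->]]].
    pose proof (F2 _ _ _ (r_pts Zs) (r_det Zs) ns _ (form_of be) Hns) as G.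
    rewrite ftr_form in G. exact G. }
  destruct (H F HsF) as [_ [Zt HZt]].
  destruct (res_bounded _ _ _ t Ht Zt) as [nt Hnt].
  set (Et := En _ _ (rtrans Zt) nt (rinit Zt)).
  set (Mt := Mv _ _ (rtrans Zt) nt (rinit Zt)).
  assert (HMK : forall be, In be K -> Ms be = Mt be).
  { intros be Hb. assert (Hin : In (Ms be, form_of be) F) by (unfold F; apply in_map with (f := fun be => (Ms be, form_of be)); auto).
    pose proof (HZt _ _ Hin) as G.
    pose proof (F2 _ _ _ (r_pts Zt) (r_det Zt) nt _ (form_of be) Hnt) as G2.
    rewrite ftr_form in G2. exact (PrSet_unique _ _ _ G G2). }
  assert (HMt0 : forall be, ~ In be K -> Mt be = 0).
  { intros be Hn. assert (0 <= Mt be) by (apply Mv_ge0; apply r_pts).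
    assert (HnK' : NoDup (be :: K)) by (constructor; auto).
    pose proof (fiber (@comp_tr _ _) (fun c => ind (comp_max (rtrans Zt) (rinit Zt) c) (comp_pr c)) Et (be :: K) HnK') as Hf.
    cbv beta in Hf. rewrite lsum_cons in Hf.
    change (lsum (fun k => lsum (fun c => ind (comp_tr c = k) (ind (comp_max (rtrans Zt) (rinit Zt) c) (comp_pr c))) Et) K)
      with (lsum Mt K) in Hf.
    change (lsum (fun c => ind (comp_tr c = be) (ind (comp_max (rtrans Zt) (rinit Zt) c) (comp_pr c))) Et) with (Mt be) in Hf.
    rewrite <- (lsum_ext_in Ms Mt K HMK), Hsum in Hf.
    assert (lsum (fun c => ind (In (comp_tr c) (be :: K)) (ind (comp_max (rtrans Zt) (rinit Zt) c) (comp_pr c))) Et <= 1).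
    { rewrite <- (total _ _ _ (r_pts Zt) nt (rinit Zt) Hnt). apply lsum_le. intros c Hc.
      apply ind_le, ind_ge0. left. eapply comp_pr_pos. eapply En_comp; [apply r_pts| exact Hc]. }
    lra. }
  assert (HM : forall be, Ms be = Mt be).
  { intro be. destruct (classic (In be K)); auto. rewrite HMsK, HMt0; auto. }
  exists Zt. intro al. exists (Pv _ _ (rtrans Zs) ns (rinit Zs) al). split.
  - apply F1; auto; [apply r_pts| apply r_det].
  - replace (Pv _ _ (rtrans Zs) ns (rinit Zs) al) with (Pv _ _ (rtrans Zt) nt (rinit Zt) al).
    + apply F1; auto; [apply r_pts| apply r_det].
    + unfold Pv. rewrite (key2 _ _ _ (r_pts Zs)) by auto. rewrite (key2 _ _ _ (r_pts Zt)) by auto.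
      symmetry.
      pose proof (keyG (En _ _ (rtrans Zs) ns (rinit Zs)) (En _ _ (rtrans Zt) nt (rinit Zt))
        (@comp_tr _ _) (@comp_tr _ _)
        (fun c => ind (comp_max (rtrans Zs) (rinit Zs) c) (comp_pr c))
        (fun c => ind (comp_max (rtrans Zt) (rinit Zt) c) (comp_pr c)) HM
        (fun be => exists d, be = al ++ d)) as K'.
      cbv beta in K'. exact K'.
Qed.

Theorem main s t (Hs : finite_proc trans s) (Ht : finite_proc trans t) :
  sptrace_equiv trans s t <-> (forall F, Lset trans s F <-> Lset trans t F).
Proof.
  split.
  - intros [H1 H2] F. split; [apply dir1| apply dir1]; auto.
  - intro H. split; apply dir2; auto; intros F; apply H.
Qed.

End Dirs.

Theorem theorem10 (S A : Type) (trans : transrel A S)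
  (Hpts : is_PTS trans) (Himg : image_finite trans)
  (s t : S) (Hs : finite_proc trans s) (Ht : finite_proc trans t) :
  sptrace_equiv trans s t <-> (forall F, Lset trans s F <-> Lset trans t F).
Proof.
  exact (main S A trans s t Hs Ht).
Qed.
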